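(* Let $p$ be a prime, $k\ge 1$, and $q=p^k$. Every integer group determinant $D$ of the group $GA(1,q)$ can be written in the form $$D=AB^{q-1},$$ where $A$ is a $\mathbb Z_{q-1}$ integer group determinant and $B$ is an integer with $B\equiv A \pmod q$.
   Context: For a finite group $G=\{g_1,\dots,g_n\}$ and an element $\sum_{g\in G}a_g g$ of the group ring $\mathbb Z[G]$ (all $a_g\in\mathbb Z$), the group determinant is $D\left(\sum_{g\in G}a_g g\right)=\det\left(a_{g_ig_j^{-1}}\right)_{i,j=1}^n$. An integer group determinant of $G$ is any integer of this form (with integer coefficients $a_g$). A $\mathbb Z_m$ integer group determinant (or $\mathbb Z_m$ integer determinant) is an integer group determinant of the cyclic group $\mathbb Z_m$; equivalently, an integer of the form $\prod_{x^m=1}f(x)$ for some $f\in\mathbb Z[x]$, the product being over all complex $m$-th roots of unity. The general affine group of degree one over $\mathbb F_q$ is $GA(1,q)=\left\{\begin{pmatrix} a & b\\ 0 & 1\end{pmatrix}: a\in\mathbb F_q^*,\ b\in\mathbb F_q\right\}$ under matrix multiplication, i.e. the semidirect product $\mathbb F_q\rtimes\mathbb F_q^*$ with $\mathbb F_q^*$ acting by multiplication; it has order $q(q-1)$. *)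

(* Defs.v *)
From mathcomp Require Import all_boot all_order all_algebra all_fingroup all_field.
Set Implicit Arguments. Unset Strict Implicit. Unset Printing Implicit Defensive.
Import GRing.Theory Num.Theory.
Local Open Scope ring_scope.

Definition group_det (T : finType) (mul : T -> T -> T) (inv : T -> T)
  (a : T -> int) : int :=
  \det (\matrix_(i < #|T|, j < #|T|) a (mul (enum_val i) (inv (enum_val j)))).

Definition int_group_det (T : finType) (mul : T -> T -> T) (inv : T -> T)
  (D : int) : Prop :=
  exists a : T -> int, D = group_det mul inv a.

Lemma ord_pos (m : nat) (i : 'I_m) : (0 < m)%N.
Proof. exact: leq_ltn_trans (leq0n i) (ltn_ord i). Qed.

Definition Zm_add (m : nat) (i j : 'I_m) : 'I_m :=
  Ordinal (ltn_pmod (i + j) (ord_pos i)).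
Definition Zm_opp (m : nat) (i : 'I_m) : 'I_m :=
  Ordinal (ltn_pmod (m - i) (ord_pos i)).

Definition Zm_int_det (m : nat) (D : int) : Prop :=
  int_group_det (@Zm_add m) (@Zm_opp m) D.

(* GA(1,F) = { [[a, b], [0, 1]] : a in F^*, b in F }, represented by pairs (a, b). *)
Definition GA_mul (F : finFieldType) (x y : ({unit F} * F)%type) : ({unit F} * F)%type :=
  ((x.1 * y.1)%g, val x.1 * y.2 + x.2).
Definition GA_inv (F : finFieldType) (x : ({unit F} * F)%type) : ({unit F} * F)%type :=
  ((x.1)^-1%g, - (val (x.1^-1)%g * x.2)).

(* Main.v *)
Require Import Defs.
From HB Require Import structures.
From mathcomp Require Import all_boot all_order all_algebra all_fingroup all_field.
From mathcomp Require Import all_solvable.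
Set Implicit Arguments. Unset Strict Implicit. Unset Printing Implicit Defensive.
Import GRing.Theory Num.Theory.
Local Open Scope ring_scope.
Section GRdef.
Variable V : finZmodType.
Definition GR := {ffun V -> int}.
HB.instance Definition _ := GRing.Zmodule.on GR.
Definition gmul (x y : GR) : GR := [ffun c => \sum_(d : V) x d * y (c - d)].
Definition gone : GR := [ffun c => (c == 0)%:Z].

Lemma gmulA : associative gmul.
Proof.
move=> x y z; apply/ffunP => c; rewrite /gmul !ffunE.
under eq_bigr do rewrite ffunE mulr_sumr.
under [RHS]eq_bigr do rewrite ffunE mulr_suml.
rewrite [RHS]exchange_big /=; apply: eq_bigr => d _.
rewrite [RHS](reindex_inj (addrI d)) /=.
apply: eq_bigr => e _; rewrite mulrA; congr (_ * _ * z _).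
  by rewrite addrC addKr.
by rewrite opprD addrA.
Qed.

Lemma gmulC : commutative gmul.
Proof.
move=> x y; apply/ffunP => c; rewrite /gmul !ffunE.
rewrite (reindex_inj (inv_inj (subKr c))) /=.
by apply: eq_bigr => d _; rewrite subKr mulrC.
Qed.

Lemma gmul1 : left_id gone gmul.
Proof.
move=> x; apply/ffunP => c; rewrite /gmul /gone !ffunE (bigD1 0) //= big1 ?addr0.
  by rewrite ffunE eqxx mul1r subr0.
by move=> d /negbTE nd; rewrite ffunE nd mul0r.
Qed.

Lemma gmulDl : left_distributive gmul +%R.
Proof.
move=> x y z; apply/ffunP => c; rewrite /gmul !ffunE -big_split /=.
by apply: eq_bigr => d _; rewrite ffunE mulrDl.
Qed.

Lemma gone_neq0 : gone != 0.
Proof. by apply/eqP => /ffunP /(_ 0); rewrite !ffunE eqxx. Qed.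

HB.instance Definition _ := GRing.Zmodule_isComNzRing.Build GR gmulA gmulC gmul1 gmulDl gone_neq0.

Lemma GRmulE (x y : GR) c : (x * y) c = \sum_(d : V) x d * y (c - d).
Proof. by rewrite /GRing.mul /= ffunE. Qed.
Lemma GRoneE c : (1 : GR) c = (c == 0)%:Z.
Proof. by rewrite /GRing.one /= ffunE. Qed.
Lemma GRaddE (x y : GR) c : (x + y) c = x c + y c.
Proof. by rewrite ffunE. Qed.
End GRdef.
Section DetT.
Variable R : comNzRingType.

Definition detT (I : finType) (f : I -> I -> R) : R :=
  \det (\matrix_(i < #|I|, j < #|I|) f (enum_val i) (enum_val j)).

Lemma eq_detT (I : finType) (f g : I -> I -> R) :
  (forall x y, f x y = g x y) -> detT f = detT g.
Proof. by move=> fg; rewrite /detT; congr (\det _); apply/matrixP => i j; rewrite !mxE. Qed.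

Lemma det_perm_conj N (A : 'M[R]_N) (s : 'S_N) :
  \det (\matrix_(i, j) A (s i) (s j)) = \det A.
Proof.
have -> : \matrix_(i, j) A (s i) (s j) = row_perm s (col_perm s A).
  by apply/matrixP => i j; rewrite !mxE.
rewrite row_permE col_permE !det_mulmx !det_perm odd_permV mulrA mulrC mulrA.
by rewrite -signr_addb addbb expr0 mul1r.
Qed.

Lemma detT_ord (I : finType) N (e : 'I_N -> I) (f : I -> I -> R) :
  bijective e -> \det (\matrix_(i, j) f (e i) (e j)) = detT f.
Proof.
move=> be; have eN : N = #|I| by rewrite -(bij_eq_card be) card_ord.
subst N; rewrite /detT.
have inj_s : injective (enum_rank \o e).
  by move=> x y /= /enum_rank_inj; apply: (bij_inj be).
symmetry; rewrite -(det_perm_conj _ (perm inj_s)); congr (\det _).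
by apply/matrixP => i j; rewrite !mxE !permE /= !enum_rankK.
Qed.

Lemma detT_bij (I J : finType) (h : J -> I) (f : I -> I -> R) :
  bijective h -> detT (fun x y => f (h x) (h y)) = detT f.
Proof.
move=> bh; rewrite {1}/detT; apply: (detT_ord (e := h \o enum_val)).
apply: bij_comp => //; exact: enum_val_bij.
Qed.

End DetT.
Lemma detT_map (R S : comNzRingType) (phi : {rmorphism R -> S}) (I : finType)
  (f : I -> I -> R) : phi (detT f) = detT (fun x y => phi (f x y)).
Proof.
rewrite /detT -det_map_mx; congr (\det _).
by apply/matrixP => i j; rewrite !mxE.
Qed.

Section DetT2.
Variable R : comNzRingType.

Lemma detT_lblock (I1 I2 : finType) (g : I1 + I2 -> I1 + I2 -> R) :
  (forall x y, g (inl x) (inr y) = 0) ->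
  detT g = detT (fun x y => g (inl x) (inl y)) * detT (fun x y => g (inr x) (inr y)).
Proof.
move=> g0.
pose e (k : 'I_(#|I1| + #|I2|)) : I1 + I2 :=
  match split k with inl i => inl (enum_val i) | inr j => inr (enum_val j) end.
have be : bijective e.
  exists (fun x => match x with inl x1 => lshift #|I2| (enum_rank x1)
                   | inr x2 => rshift #|I1| (enum_rank x2) end).
    move=> k; rewrite /e -[k in RHS]splitK; case: (split k) => i /=; by rewrite enum_valK.
  by case=> x; rewrite /e ?(unsplitK (inl _)) ?(unsplitK (inr _)) enum_rankK.
rewrite -(detT_ord _ be).
have -> : \matrix_(i, j) g (e i) (e j) =
  block_mx (\matrix_(i, j) g (inl (enum_val i)) (inl (enum_val j))) 0
           (\matrix_(i, j) g (inr (enum_val i)) (inl (enum_val j)))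
           (\matrix_(i, j) g (inr (enum_val i)) (inr (enum_val j))).
  apply/matrixP => i j; rewrite /e !mxE.
  by case: (split i) => [i1|i1]; rewrite !mxE; case: (split j) => [j1|j1]; rewrite !mxE ?g0.
exact: det_lblock.
Qed.

Lemma detT_pair_trig (J : finType) m (f : J * 'I_m.+1 -> J * 'I_m.+1 -> R) :
  (forall u (i : 'I_m.+1) v (j : 'I_m.+1), (i < j)%N -> f (u, i) (v, j) = 0) ->
  detT f = \prod_(i < m.+1) detT (fun u v => f (u, i) (v, i)).
Proof.
elim: m f => [|m IH] f ftrig.
  rewrite big_ord1.
  have bh : bijective (fun u : J => (u, @ord0 0)).
    exists fst => // [[u i]]; by rewrite (ord1 i).
  by rewrite -(detT_bij f bh).
pose h (x : J + J * 'I_m.+1) : J * 'I_m.+2 :=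
  match x with inl u => (u, ord0) | inr ui => (ui.1, lift ord0 ui.2) end.
have bh : bijective h.
  exists (fun x : J * 'I_m.+2 => match unlift ord0 x.2 with
            | None => inl x.1 | Some i => inr (x.1, i) end).
    by case=> [u|[u i]] /=; rewrite ?unlift_none ?liftK.
  case=> u i /=; case: unliftP => [j ->|->] //.
rewrite -(detT_bij f bh) detT_lblock; last first.
  by move=> x [v j]; rewrite /h ftrig.
rewrite big_ord_recl; congr (_ * _).
rewrite (IH (fun x y => f (h (inr x)) (h (inr y)))) /=.
  by apply: eq_bigr.
by move=> u i v j lij; rewrite ftrig.
Qed.

Lemma detT_conj (I : finType) (f q q' : I -> I -> R) :
  (forall x y, \sum_z q x z * q' z y = (x == y)%:R) ->
  detT (fun x y => \sum_z \sum_w q x z * f z w * q' w y) = detT f.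
Proof.
move=> qq.
pose M (g : I -> I -> R) := \matrix_(i < #|I|, j < #|I|) g (enum_val i) (enum_val j).
have bv : {on [pred z | true], bijective (@enum_val I [pred z | true])}.
  by apply: onW_bij; exact: enum_val_bij.
have sumE (F : I -> R) : \sum_z F z = \sum_(k < #|I|) F (enum_val k).
  by rewrite (reindex _ bv).
have E1 : M q *m M q' = 1%:M.
  apply/matrixP => i j; rewrite !mxE.
  under eq_bigr do rewrite !mxE.
  by rewrite -(sumE (fun z => q (enum_val i) z * q' z (enum_val j))) qq
     (inj_eq enum_val_inj).
have E2 : M (fun x y => \sum_z \sum_w q x z * f z w * q' w y) = M q *m M f *m M q'.
  apply/matrixP => i j; rewrite !mxE.
  under [RHS]eq_bigr do rewrite mxE mulr_suml.
  rewrite [RHS]exchange_big sumE; apply: eq_bigr => l _.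
  rewrite sumE; apply: eq_bigr => k _.
  by rewrite !mxE.
have -> : detT (fun x y => \sum_z \sum_w q x z * f z w * q' w y)
   = \det (M q *m M f *m M q') by rewrite -E2.
rewrite !det_mulmx -mulrA [_ * \det (M q')]mulrC mulrA -det_mulmx E1 det1 mul1r //.
Qed.
End DetT2.
Lemma sum_ordT (R : nmodType) (I : finType) (F : I -> R) :
  \sum_(z : I) F z = \sum_(k < #|I|) F (enum_val k).
Proof. by rewrite -big_enum_val. Qed.

Section GRfield.
Variable F : finFieldType.
Local Notation GF := (GR F).

Definition geps (x : GF) : int := \sum_(c : F) x c.

Lemma geps_zmod : zmod_morphism geps.
Proof.
move=> x y; rewrite /geps -sumrB; apply: eq_bigr => c _.
by rewrite !ffunE.
Qed.

Lemma geps_monoid : monoid_morphism geps.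
Proof.
split.
  rewrite /geps (bigD1 0) //= big1 ?addr0; first by rewrite GRoneE eqxx.
  by move=> d /negbTE nd; rewrite GRoneE nd.
move=> x y; rewrite /geps mulr_suml.
under eq_bigr do rewrite GRmulE.
rewrite exchange_big /=; apply: eq_bigr => d _.
rewrite mulr_sumr (reindex_inj (addrI d)) /=.
by apply: eq_bigr => e _; rewrite addrC addKr.
Qed.

HB.instance Definition _ := GRing.isZmodMorphism.Build GF int geps geps_zmod.
HB.instance Definition _ := GRing.isMonoidMorphism.Build GF int geps geps_monoid.

Definition gsig (t : {unit F}) (x : GF) : GF := [ffun c => x (val t * c)].

Lemma gsig_zmod t : zmod_morphism (gsig t).
Proof. by move=> x y; apply/ffunP => c; rewrite !ffunE. Qed.

Lemma gsig_monoid t : monoid_morphism (gsig t).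
Proof.
have tu : val t \is a GRing.unit := valP t.
split.
  apply/ffunP => c; rewrite ffunE !GRoneE.
  by move: (tu); rewrite unitfE => /negbTE tn; rewrite mulf_eq0 tn.
move=> x y; apply/ffunP => c; rewrite ffunE !GRmulE.
rewrite (reindex_inj (mulrI tu)) /=.
apply: eq_bigr => d _; rewrite !ffunE; congr (_ * y _).
by rewrite mulrBr.
Qed.

HB.instance Definition _ t := GRing.isZmodMorphism.Build GF GF (gsig t) (gsig_zmod t).
HB.instance Definition _ t := GRing.isMonoidMorphism.Build GF GF (gsig t) (gsig_monoid t).

Definition Cm (x : GF) : 'M[algC]_#|F| :=
  \matrix_(i, j) (x (enum_val i - enum_val j))%:~R.

Lemma CmD x y : Cm (x + y) = Cm x + Cm y.
Proof. by apply/matrixP => i j; rewrite !mxE ffunE rmorphD. Qed.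

Lemma CmZ (n : int) (x : GF) : Cm (x *~ n) = n%:~R *: Cm x.
Proof. by apply/matrixP => i j; rewrite !mxE ffunMzE rmorphMz mulrzl. Qed.

Lemma CmM x y : Cm (x * y) = Cm x *m Cm y.
Proof.
apply/matrixP => i j; rewrite !mxE GRmulE rmorph_sum.
rewrite (reindex_inj (inv_inj (subKr (enum_val i)))) /= sum_ordT.
apply: eq_bigr => k _; rewrite !mxE rmorphM; congr (_ * (y _)%:~R).
by rewrite opprB addrC addrA subrK.
Qed.

Lemma Cm1 : Cm 1 = 1%:M.
Proof.
apply/matrixP => i j; rewrite !mxE GRoneE subr_eq0 (inj_eq enum_val_inj).
by case: (i == j).
Qed.

End GRfield.
Lemma detT_pair_trigN (R : comNzRingType) (J : finType) N (f : J * 'I_N -> J * 'I_N -> R) :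
  (0 < N)%N ->
  (forall u (i : 'I_N) v (j : 'I_N), (i < j)%N -> f (u, i) (v, j) = 0) ->
  detT f = \prod_(i < N) detT (fun u v => f (u, i) (v, i)).
Proof. by case: N f => // N f _; apply: detT_pair_trig. Qed.

Lemma trig_diag_mul n (A B : 'M[algC]_n) k :
  is_trig_mx A -> is_trig_mx B -> (A *m B) k k = A k k * B k k.
Proof.
move=> /is_trig_mxP tA /is_trig_mxP tB; rewrite mxE (bigD1 k) //= big1 ?addr0 //.
move=> j /negbTE nj; case: (ltngtP k j) => [kj|jk|/val_inj e].
- by rewrite tA // mul0r.
- by rewrite tB // mulr0.
- by rewrite e eqxx in nj.
Qed.

Lemma sum_pair (R : nmodType) (I J : finType) (G : I * J -> R) :
  \sum_z G z = \sum_a \sum_b G (a, b).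
Proof. by rewrite pair_bigA; apply: eq_bigr => -[a b]. Qed.

Section Lam.
Variable F : finFieldType.
Local Notation GF := (GR F).
Variable P : 'M[algC]_#|F|.
Hypothesis Pu : P \in unitmx.
Hypothesis Ptrig : forall x : GF, is_trig_mx (P *m Cm x *m invmx P).

Definition lam (k : 'I_#|F|) (x : GF) : algC := (P *m Cm x *m invmx P) k k.

Lemma lam_zmod k : zmod_morphism (lam k).
Proof.
move=> x y; rewrite /lam.
have -> : Cm (x - y) = Cm x - Cm y by rewrite CmD -[- y]mulrN1z CmZ scaleN1r.
by rewrite mulmxBr mulmxBl !mxE.
Qed.

Lemma lam_monoid k : monoid_morphism (lam k).
Proof.
split; first by rewrite /lam Cm1 mulmx1 mulmxV // mxE eqxx.
move=> x y; rewrite /lam -trig_diag_mul //.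
by rewrite CmM !mulmxA mulmxKV.
Qed.

HB.instance Definition _ k := GRing.isZmodMorphism.Build GF algC (lam k) (lam_zmod k).
HB.instance Definition _ k := GRing.isMonoidMorphism.Build GF algC (lam k) (lam_monoid k).

Lemma lam_detT k (I : finType) (E : I -> I -> GF) :
  lam k (detT E) = detT (fun u v => lam k (E u v)).
Proof. exact: detT_map. Qed.

Lemma lam_trace (x : GF) : \sum_k lam k x = \tr (Cm x).
Proof.
rewrite /lam -/(\tr _) mxtrace_mulC mulmxA mulVmx // mul1mx //.
Qed.

Lemma silvester (J : finType) (E : J -> J -> GF) :
  detT (fun x y : J * 'I_#|F| => Cm (E x.1 y.1) x.2 y.2)
  = \prod_(k < #|F|) lam k (detT E).
Proof.
pose Q (x y : J * 'I_#|F|) : algC := (x.1 == y.1)%:R * P x.2 y.2.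
pose Q' (x y : J * 'I_#|F|) : algC := (x.1 == y.1)%:R * invmx P x.2 y.2.
rewrite -(detT_conj _ (q := Q) (q' := Q')); last first.
  move=> [u i] [v j].
  have -> : \sum_z Q (u, i) z * Q' z (v, j) =
    \sum_w \sum_k Q (u, i) (w, k) * Q' (w, k) (v, j).
    by rewrite pair_bigA; apply: eq_bigr => -[w k].
  rewrite (bigD1 u) //= [X in _ + X]big1 ?addr0; last first.
    by move=> w /negbTE nw; apply: big1 => k _; rewrite /Q /= eq_sym nw mul0r mul0r.
  rewrite /Q /Q' /=.
  under eq_bigr do rewrite mulrACA.
  rewrite -mulr_sumr.
  have := mulmxV Pu; move/matrixP/(_ i j); rewrite !mxE => ->.
  by rewrite eqxx xpair_eqE; case: (u == v); case: (i == j); rewrite /= ?mulr1 ?mulr0 ?mul0r.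
have Hc u i v j : \sum_z \sum_w Q (u, i) z * Cm (E z.1 w.1) z.2 w.2 * Q' w (v, j)
   = (P *m Cm (E u v) *m invmx P) i j.
  rewrite sum_pair (bigD1 u) //= [X in _ + X]big1 ?addr0; last first.
    move=> z1 /negbTE nz; apply: big1 => k _; apply: big1 => w _.
    by rewrite /Q /= eq_sym nz !mul0r.
  rewrite !mxE.
  under [RHS]eq_bigr do rewrite mxE mulr_suml.
  rewrite [RHS]exchange_big /=; apply: eq_bigr => k _.
  rewrite sum_pair (bigD1 v) //= [X in _ + X]big1 ?addr0; last first.
    move=> w1 /negbTE nw; apply: big1 => l _.
    by rewrite /Q' /= nw !mul0r mulr0.
  apply: eq_bigr => l _.
  by rewrite /Q /Q' /= !eqxx !mulr1n !mul1r.
rewrite (detT_pair_trigN (N := #|F|)); last first.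
- move=> u i v j lij /=; rewrite Hc.
  by have /is_trig_mxP -> := Ptrig (E u v).
- by apply/card_gt0P; exists 0.
apply: eq_bigr => k _; rewrite lam_detT; apply: eq_detT => x y /=.
exact: Hc.
Qed.
End Lam.
Lemma exists_trigP (F : finFieldType) :
  exists2 P : 'M[algC]_#|F|, P \in unitmx &
    forall x : GR F, is_trig_mx (P *m Cm x *m invmx P).
Proof.
pose delta (d : F) : GR F := [ffun c => (c == d)%:Z].
have decomp (x : GR F) : x = \sum_d delta d *~ x d.
  apply/ffunP => c; rewrite sum_ffunE (bigD1 c) //= big1 ?addr0.
    by rewrite ffunMzE ffunE eqxx intz.
  by move=> d /negbTE nd; rewrite ffunMzE ffunE eq_sym nd mul0rz.
have Cm_sum (I : finType) (G : I -> GR F) : Cm (\sum_i G i) = \sum_i Cm (G i).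
  elim/big_rec2: _ => [|i y1 y2 _ <-]; last by rewrite CmD.
  by apply/matrixP => i j; rewrite !mxE ffunE.
pose As := [seq Cm (delta d) | d <- enum F].
have comm : {in As &, forall A B, comm_mx A B}.
  move=> A B /mapP [d _ ->] /mapP [e _ ->].
  by rewrite /comm_mx -!CmM mulrC.
have [P Pu Pall] := cotrigonalization comm.
have Pun : P \in unitmx by exact: unitarymx_unit.
exists P => // x.
have Ptd d : is_trig_mx (P *m Cm (delta d) *m invmx P).
  have /allP /(_ (Cm (delta d))) := Pall.
  rewrite /similar_to /conjmx pinvmxE //; apply.
  by apply/mapP; exists d; rewrite ?mem_enum.
rewrite [x]decomp Cm_sum.
apply/is_trig_mxP => i j lij.
rewrite mulmx_sumr mulmx_suml summxE big1 // => d _.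
rewrite CmZ -scalemxAr -scalemxAl mxE.
by have /is_trig_mxP -> := Ptd d; rewrite ?mulr0.
Qed.
Section Main.
Variable F : finFieldType.
Variable a : {unit F} * F -> int.

Definition Ea (u v : {unit F}) : GR F := [ffun d => a ((u * v^-1)%g, val u * d)].
Definition Xa : GR F := detT Ea.

Lemma unitK (u : {unit F}) (b : F) : (val u)^-1 * (val u * b) = b.
Proof. by rewrite mulKr //; exact: (valP u). Qed.

Lemma step1 : (group_det (@GA_mul F) (@GA_inv F) a)%:~R =
  detT (fun x y : {unit F} * 'I_#|F| => Cm (Ea x.1 y.1) x.2 y.2).
Proof.
pose h (x : {unit F} * 'I_#|F|) : {unit F} * F := (x.1, val x.1 * enum_val x.2).
have bh : bijective h.
  exists (fun y : {unit F} * F => (y.1, enum_rank ((val y.1)^-1 * y.2))).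
    by move=> [u i]; rewrite /h /= unitK enum_valK.
  by move=> [u b]; rewrite /h /= enum_rankK mulVKr //; exact: (valP u).
have -> : group_det (@GA_mul F) (@GA_inv F) a = detT (fun x y => a (GA_mul x (GA_inv y))) by [].
rewrite (detT_map ((intr : int -> algC) : {rmorphism int -> algC})) -(detT_bij _ bh).
apply: eq_detT => -[u i] [v j]; rewrite /h /= mxE ffunE /GA_mul /GA_inv /=.
congr ((a (_, _))%:~R).
rewrite mulKr; last exact: (valP v).
by rewrite mulrN addrC -mulrBr.
Qed.

Lemma unit_mulC (u v : {unit F}) : (u * v = v * u)%g.
Proof. by apply: val_inj; rewrite !FinRing.val_unitM mulrC. Qed.

Lemma Xa_inv (t : {unit F}) (d : F) : Xa (val t * d) = Xa d.
Proof.
have := detT_map (gsig t) Ea; rewrite -/Xa => H.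
have : gsig t Xa = Xa.
  rewrite H -[RHS](detT_bij Ea (h := fun u => (u * t)%g)); last first.
    by exists (fun u => (u * t^-1)%g) => u; rewrite ?mulgK ?mulgKV.
  apply: eq_detT => u v; apply/ffunP => c; rewrite /Ea !ffunE.
  congr (a (_, _)); last by rewrite FinRing.val_unitM mulrA.
  by rewrite invMg -mulgA mulKVg.
by move/ffunP/(_ d); rewrite ffunE.
Qed.

Lemma Xa_const (c : F) : c != 0 -> Xa c = Xa 1.
Proof.
rewrite -unitfE => cu.
by rewrite -(Xa_inv (FinRing.Unit cu) 1) mulr1.
Qed.

Lemma geps_Ea u v : geps (Ea u v) = \sum_b a ((u * v^-1)%g, b).
Proof.
rewrite /geps /Ea [RHS](reindex_inj (mulrI (valP u))) /=.
by apply: eq_bigr => d _; rewrite ffunE.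
Qed.

End Main.
Lemma prod_lemma (n q : nat) (c : 'I_n -> algC) (al be : algC) :
  (0 < q)%N -> (forall k, c k * c k = c k * q%:R) -> \sum_k c k = q%:R ->
  \prod_k (al + c k * be) = (al + q%:R * be) * al ^+ n.-1.
Proof.
move=> q0 cq csum.
pose S := [set k | c k != 0].
have cS k : k \in S -> c k = q%:R.
  by rewrite inE => ck; apply: (mulfI ck); rewrite cq mulrC.
have cnS k : k \notin S -> c k = 0.
  by rewrite inE negbK => /eqP.
have qn0 : (q%:R : algC) != 0 by rewrite pnatr_eq0 -lt0n.
have cardS : #|S| = 1%N.
  have : \sum_k c k = #|S|%:R * q%:R.
    rewrite (bigID (fun k => k \in S)) /= [X in _ + X]big1 ?addr0; last first.
      by move=> k /cnS.
    rewrite (eq_bigr (fun _ => q%:R)); last by move=> k /cS.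
    by rewrite sumr_const mulr_natl.
  rewrite csum -{1}[q%:R]mul1r => /(mulIf qn0) /eqP.
  by rewrite -(mulr1n (1 : algC)) eqr_nat eq_sym => /eqP.
rewrite (bigID (fun k => k \in S)) /=.
rewrite (eq_bigr (fun _ => al + q%:R * be)); last by move=> k /cS ->.
rewrite [X in _ * X](eq_bigr (fun _ => al)); last by move=> k /cnS ->; rewrite mul0r addr0.
have -> : \prod_(i < n | i \notin S) al = al ^+ #|~: S|.
  by rewrite -prodr_const; apply: eq_bigl => k; rewrite in_setC.
have cC : #|~: S| = n.-1 by rewrite cardsCs setCK card_ord cardS subn1.
by rewrite cC prodr_const cardS expr1.
Qed.
Lemma GA_det_formula (F : finFieldType) (a : {unit F} * F -> int) :
  group_det (@GA_mul F) (@GA_inv F) a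
   = (Xa a 0 - Xa a 1 + Xa a 1 *+ #|F|) * (Xa a 0 - Xa a 1) ^+ #|F|.-1.
Proof.
have [P Pu Ptrig] := exists_trigP F.
apply: (@intr_inj algC).
rewrite step1 (silvester Pu Ptrig) -/(Xa a).
set al := Xa a 0 - Xa a 1; set be := Xa a 1.
pose N : GR F := [ffun _ => 1].
have XE : Xa a = 1 *~ al + N *~ be.
  apply/ffunP => c; rewrite ffunE !ffunMzE GRoneE ffunE.
  case: (eqVneq c 0) => [->|c0] /=.
    by rewrite -[1%Z *~ al]/(al%:~R) !intz /al /be subrK.
  by rewrite mul0rz add0r intz Xa_const.
have lamX k : lam P k (Xa a) = al%:~R + lam P k N * be%:~R.
  by rewrite XE rmorphD !rmorphMz rmorph1 mulrzr.
rewrite (eq_bigr _ (fun k _ => lamX k)).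
rewrite (prod_lemma (q := #|F|)).
- by rewrite [in RHS]rmorphM [in RHS]rmorphXn [in RHS]rmorphD [in RHS]rmorphMn mulr_natl.
- by apply/card_gt0P; exists 0.
- move=> k; rewrite -rmorphM (mulr_natr (lam P k N)) -rmorphMn; congr (lam P k _).
  apply/ffunP => c; rewrite GRmulE ffunMnE !ffunE.
  under eq_bigr do rewrite !ffunE mulr1.
  by rewrite sumr_const.
rewrite lam_trace // /mxtrace.
under eq_bigr do rewrite mxE ffunE.
by rewrite sumr_const card_ord.
Qed.
Lemma geps_Xa (F : finFieldType) (a : {unit F} * F -> int) :
  geps (Xa a) = Xa a 0 - Xa a 1 + Xa a 1 *+ #|F|.
Proof.
rewrite /geps (bigD1 0) //=.
rewrite (eq_bigr (fun _ => Xa a 1)); last by move=> c c0; rewrite Xa_const.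
rewrite sumr_const.
have -> : #|(fun i : F => i != 0)| = #|F|.-1 by exact: cardC1.
have q0 : (0 < #|F|)%N by apply/card_gt0P; exists 0.
by rewrite -[in RHS](prednK q0) mulrS addrA subrK.
Qed.
Lemma units_Zm (F : finFieldType) (s : {unit F} -> int) :
  Zm_int_det #|F|.-1 (detT (fun u v : {unit F} => s (u * v^-1)%g)).
Proof.
set m := #|F|.-1.
have [g gen] := cyclicP (field_unit_group_cyclic [set: {unit F}]%G).
have og : #[g]%g = m.
  by rewrite /order -gen; exact: card_finField_unit.
pose iota (i : 'I_m) : {unit F} := (g ^+ i)%g.
have inj_iota : injective iota.
  move=> i j /eqP; rewrite /iota eq_expg_mod_order og !modn_small //.
  by move/eqP/val_inj.
have b_iota : bijective iota.
  apply: inj_card_bij => //; rewrite card_ord -/m.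
  by rewrite /m -card_finField_unit cardsT.
exists (fun i => s (iota i)).
rewrite -(detT_bij (fun u v : {unit F} => s (u * v^-1)%g) b_iota).
symmetry; change (detT (fun i j : 'I_m => s (iota (Zm_add i (Zm_opp j)))) = detT (fun x y : 'I_m => s (iota x * (iota y)^-1)%g)).
apply: eq_detT => i j /=; congr (s _).
have gm : (g ^+ m = 1)%g by rewrite -og expg_order.
rewrite /iota /Zm_add /Zm_opp /= (expg_mod _ gm) expgD (expg_mod _ gm).
congr (_ * _)%g.
have jm : (j <= m)%N by rewrite ltnW.
by apply/eqP; rewrite eq_sym eq_invg_mul -expgD subnKC // gm eqxx.
Qed.
Unset Implicit Arguments.
Set Strict Implicit.

Theorem theorem1 (p k : nat) (F : finFieldType) :
  prime p -> (0 < k)%N -> #|F| = (p ^ k)%N ->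
  forall D : int, int_group_det (@GA_mul F) (@GA_inv F) D ->
  exists A B : int,
    [/\ Zm_int_det (p ^ k).-1 A,
        (B = A %[mod (p ^ k)%N%:Z])%Z
      & D = A * B ^+ (p ^ k).-1].
Proof.
move=> _ _ cardF D [a ->]; rewrite -cardF.
exists (Xa a 0 - Xa a 1 + Xa a 1 *+ #|F|), (Xa a 0 - Xa a 1); split.
- rewrite -geps_Xa /Xa (detT_map (@geps F)).
  rewrite (eq_detT (g := fun u v => \sum_b a ((u * v^-1)%g, b))); last first.
    by move=> u v; exact: geps_Ea.
  exact: (units_Zm (fun w => \sum_b a (w, b))).
- by rewrite -mulr_natr natz [in RHS]addrC modzMDl.
- exact: GA_det_formula.
Qed.
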